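(* Let $n\ge2$, let $f=(f_1,\dots,f_n):\{-1,1\}^n\to\{-1,1\}^n$ be a bijection, and let $k$ be an integer with $1\le k\le n-1$. Then $\deg(f_i)=1$ for all $i\in[n]$ if and only if for every $S\subset[n]$ with $|S|=k$ there exists $T\subset[n]$ with $|T|=k$ such that: (a) for every $j\in T$, $\mathrm{Inf}_i(f_j)>0$ for at least one $i\in S$; and (b) for every $j\in[n]\setminus T$, $\mathrm{Inf}_i(f_j)=0$ for every $i\in S$.
   Context: For $f:\{-1,1\}^n\to\mathbb{R}$, $f=\sum_{S\subseteq[n]}\hat f(S)\chi_S$ with $\chi_S(x)=\prod_{i\in S}x_i$, and $\deg(f)=\max\{|S|:\hat f(S)\ne0\}$. For $g:\{-1,1\}^n\to\{-1,1\}$ and $i\in[n]$, the influence is $\mathrm{Inf}_i(g):=\Pr_{x\sim U(\{-1,1\}^n)}[g(x)\ne g(x^{\oplus i})]$, where $x^{\oplus i}$ is $x$ with its $i$-th coordinate negated. *)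

(* Defs.v *)
From mathcomp Require Import all_boot all_order all_algebra.
Set Implicit Arguments. Unset Strict Implicit. Unset Printing Implicit Defensive.
Import Order.TTheory GRing.Theory Num.Theory.
Local Open Scope ring_scope.

(* The hypercube {-1,1}^n, encoded as boolean vectors: a bit b stands for
   the sign sgnb b, with true ↦ -1 and false ↦ 1. *)
Definition cube (n : nat) := {ffun 'I_n -> bool}.

Definition sgnb (b : bool) : rat := if b then -1 else 1.

Definition chi n (S : {set 'I_n}) (x : cube n) : rat := \prod_(i in S) sgnb (x i).

Definition fourier n (g : cube n -> rat) (S : {set 'I_n}) : rat :=
  (2%:R ^- n) * \sum_(x : cube n) g x * chi S x.

Definition fdeg n (g : cube n -> rat) : nat :=
  \max_(S : {set 'I_n} | fourier g S != 0) #|S|.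

Definition flip n (x : cube n) (i : 'I_n) : cube n :=
  [ffun j => if j == i then ~~ x j else x j].

Definition Inf n (g : cube n -> bool) (i : 'I_n) : rat :=
  #|[set x : cube n | g x != g (flip x i)]|%:R / (2%:R ^+ n).

Definition coordb n (f : cube n -> cube n) (j : 'I_n) : cube n -> bool :=
  fun x => f x j.
Definition coordr n (f : cube n -> cube n) (j : 'I_n) : cube n -> rat :=
  fun x => sgnb (f x j).

(* Main.v *)
Require Import Defs.
From mathcomp Require Import all_boot all_order all_algebra.
From mathcomp Require Import ring lra zify.
Import Order.TTheory GRing.Theory Num.Theory.
Local Open Scope ring_scope.
Set Implicit Arguments. Unset Strict Implicit. Unset Printing Implicit Defensive.

Section Cube.
Variable n : nat.
Implicit Types (x y z : cube n) (i l : 'I_n).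

Lemma flipE x i j : flip x i j = if j == i then ~~ x j else x j.
Proof. by rewrite /flip ffunE. Qed.

Lemma flipK i : involutive (fun x : cube n => flip x i).
Proof. by move=> x; apply/ffunP=> j; rewrite !flipE; case: eqP => // _; rewrite negbK. Qed.

Lemma flipC x i l : flip (flip x i) l = flip (flip x l) i.
Proof. apply/ffunP=> j; rewrite !flipE; do 2 case: eqP => //. Qed.

Lemma flip_neq x i : flip x i != x.
Proof. apply/eqP => /ffunP /(_ i); rewrite flipE eqxx; by case: (x i). Qed.

Lemma sgnbN b : sgnb (~~ b) = - sgnb b.
Proof. by case: b; rewrite /sgnb ?opprK. Qed.

Lemma sgnb_inj : injective sgnb.
Proof. by case; case => //; rewrite /sgnb => /eqP; rewrite -subr_eq0 //. Qed.

Lemma sgnb4 a b c d : sgnb a - sgnb b - sgnb c + sgnb d = 0 -> a != b -> c = a /\ d = b.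
Proof.
by case: a; case: b; case: c; case: d; rewrite /sgnb => //= /eqP; rewrite ?eqxx //=;
  (try by move/eqP; lra); move=> H _; move/eqP: H; lra.
Qed.

Lemma connect_cube (P : cube n -> Prop) :
  (forall z l, P z -> P (flip z l)) -> forall y z, P y -> P z.
Proof.
move=> HP y z; move: {2}#|_| (leqnn #|[set l | y l != z l]|) => d.
elim: d y => [|d IH] y.
  rewrite leqn0 cards_eq0 => /eqP E.
  suff -> : y = z by [].
  apply/ffunP => l; apply/eqP; apply: negbNE; apply/negP => H.
  have : l \in [set l | y l != z l] by rewrite inE.
  by rewrite E inE.
case: (set_0Vmem [set l | y l != z l]) => [E _|[l Hl]].
  have -> : y = z; last by [].
  apply/ffunP => l'; apply/eqP; apply: negbNE; apply/negP => H.
  have : l' \in [set l | y l != z l] by rewrite inE.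
  by rewrite E inE.
move=> Hd Py; apply: (IH (flip y l)); last exact: HP.
have -> : [set l0 | flip y l l0 != z l0] = [set l | y l != z l] :\ l.
  apply/setP => l0; rewrite !inE flipE; case: (l0 =P l) => [->|] //=.
  by move: Hl; rewrite inE; case: (y l); case: (z l).
by move: Hd; rewrite (cardsD1 l) Hl.
Qed.

Lemma chi_flip (S : {set 'I_n}) x i :
  chi S (flip x i) = (if i \in S then -1 else 1) * chi S x.
Proof.
rewrite /chi; case: ifP => iS.
  rewrite (bigD1 i) //= [in RHS](bigD1 i) //= flipE eqxx sgnbN mulrA mulN1r.
  congr (_ * _); apply: eq_bigr => j /andP[_ Hj]; by rewrite flipE (negbTE Hj).
rewrite mul1r; apply: eq_bigr => j jS; rewrite flipE; case: eqP => // E.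
by rewrite -E jS in iS.
Qed.

Lemma sum_chi x y :
  \sum_(S : {set 'I_n}) chi S x * chi S y = if x == y then 2%:R ^+ n else 0.
Proof.
have E : forall S : {set 'I_n}, chi S x * chi S y =
   \prod_(i : 'I_n) (if i \in S then sgnb (x i) * sgnb (y i) else 1).
  by move=> S; rewrite /chi -big_split /= big_mkcond.
under eq_bigr => A _ do rewrite E.
have := bigA_distr 1 +%R (fun i => sgnb (x i) * sgnb (y i)) (fun _ => 1).
move=> /= <-.
case: eqP => [<-|/eqP nxy].
  under eq_bigr => i _ do have -> : sgnb (x i) * sgnb (x i) + 1 = 2%:R
     by case: (x i); rewrite /sgnb; lra.
  by rewrite prodr_const card_ord.
have [i Hi] : exists i, x i != y i.
  apply/existsP; apply: contraR nxy => /existsPn H; apply/eqP/ffunP => i.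
  by apply/eqP; move: (H i); rewrite negbK.
rewrite (bigD1 i) //=; move: Hi; case: (x i); case: (y i) => //= _;
  by rewrite /sgnb ?mulr1 ?mul1r addNr mul0r.
Qed.

Lemma fourier_inv (g : cube n -> rat) y :
  g y = \sum_(S : {set 'I_n}) fourier g S * chi S y.
Proof.
rewrite /fourier.
transitivity (\sum_(x : cube n) 2%:R ^- n * g x *
   \sum_(A : {set 'I_n}) chi A x * chi A y); last first.
  rewrite (eq_bigr (fun x => \sum_(A : {set 'I_n}) 2%:R ^- n * g x * (chi A x * chi A y))); last first.
    by move=> x _; rewrite mulr_sumr.
  rewrite exchange_big /=; apply: eq_bigr => A _.
  rewrite mulr_sumr mulr_suml; apply: eq_bigr => x _; ring.
under eq_bigr => x _ do rewrite sum_chi.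
rewrite (bigD1 y) //= eqxx big1; last by move=> x /negbTE ->; rewrite mulr0.
rewrite addr0 mulrAC mulVf ?mul1r // expf_neq0 // pnatr_eq0.
Qed.

Definition dep (h : cube n -> bool) i := [exists x, h x != h (flip x i)].

Lemma Inf_gt0 h i : (0 < Inf h i) = dep h i.
Proof.
rewrite /Inf ltr_pdivlMr ?exprn_gt0 ?ltr0n // mul0r ltr0n card_gt0; apply/set0Pn/existsP.
  by case=> x; rewrite inE; exists x.
by case=> x Hx; exists x; rewrite inE.
Qed.

Lemma Inf_eq0 h i : Inf h i = 0 <-> ~~ dep h i.
Proof.
rewrite -Inf_gt0; split => [->|]; first by rewrite ltxx.
rewrite /Inf lt0r negb_and negbK => /orP[/eqP //|].
by rewrite divr_ge0 ?ler0n ?exprn_ge0.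
Qed.

Lemma fdeg_leP (g : cube n -> rat) m :
  reflect (forall A, fourier g A != 0 -> (#|A| <= m)%N) (fdeg g <= m)%N.
Proof. rewrite /fdeg; exact: bigmax_leqP. Qed.

Lemma fdeg_ge (g : cube n -> rat) A : fourier g A != 0 -> (#|A| <= fdeg g)%N.
Proof. by move=> H; rewrite /fdeg (leq_bigmax_cond (F := fun B : {set 'I_n} => #|B|) _ H). Qed.

Lemma d2 (g : cube n -> rat) : (forall A, fourier g A != 0 -> (#|A| <= 1)%N) ->
  forall i l y, i != l ->
  g y - g (flip y i) - g (flip y l) + g (flip (flip y i) l) = 0.
Proof.
move=> Hg i l y il.
rewrite (fourier_inv g y) (fourier_inv g (flip y i)) (fourier_inv g (flip y l))
  (fourier_inv g (flip (flip y i) l)) -!sumrB -big_split /=.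
apply: big1 => A _; rewrite !chi_flip.
case: (boolP (i \in A)) => iA; case: (boolP (l \in A)) => lA; try ring.
have -> : fourier g A = 0.
  case: (eqVneq (fourier g A) 0) => // /Hg.
  have : [set i; l] \subset A by rewrite subUset !sub1set iA lA.
  move/subset_leq_card; rewrite cards2 il => H1 H2.
  by have := leq_trans H1 H2.
ring.
Qed.

Lemma dep_uniq (h : cube n -> bool) :
  (forall A, fourier (fun x => sgnb (h x)) A != 0 -> (#|A| <= 1)%N) ->
  forall i l, dep h i -> dep h l -> i = l.
Proof.
move=> Hg i l /existsP[y0 Hy0] /existsP[z Hz]; apply/eqP; apply/negPn/negP => il.
have D := d2 Hg.
have key : forall y l', i != l' -> h y != h (flip y i) ->
    h (flip y l') = h y /\ h (flip (flip y i) l') = h (flip y i).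
  by move=> y l' il' H; apply: sgnb4 (D i l' y il') H.
have P : forall y, h y != h (flip y i).
  have HP : forall w l', h w != h (flip w i) -> h (flip w l') != h (flip (flip w l') i).
    move=> w l' Hw.
  case: (eqVneq i l') => [<-|il'].
    by rewrite flipK eq_sym.
  have [E1 E2] := key w l' il' Hw.
  by rewrite -flipC E2 E1.
  by move=> y; apply: (connect_cube (P := fun y => h y != h (flip y i)) HP y Hy0).
have [E1 _] := key z l il (P z).
by rewrite E1 eqxx in Hz.
Qed.

Lemma fourier_indep (g : cube n -> rat) (A : {set 'I_n}) l :
  (forall x, g (flip x l) = g x) -> l \in A -> fourier g A = 0.
Proof.
move=> Hg lA; rewrite /fourier.
set s := \sum_(x : cube n) _.
suff -> : s = 0 by rewrite mulr0.
have E : s = \sum_(x : cube n) g (flip x l) * chi A (flip x l).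
  exact: (reindex_inj (can_inj (flipK l))).
have E2 : s = - s.
  rewrite {1}E -sumrN; apply: eq_bigr => x _; rewrite Hg chi_flip lA; ring.
lra.
Qed.

Lemma fdeg0_const (g : cube n -> rat) y : fdeg g = 0%N -> g y = fourier g set0.
Proof.
move=> H0; rewrite (fourier_inv g y) (bigD1 set0) //= big1.
  by rewrite addr0 /chi big_set0 mulr1.
move=> A HA; case: (eqVneq (fourier g A) 0) => [->|/fdeg_ge]; first by rewrite mul0r.
by rewrite H0 leqn0 cards_eq0 (negbTE HA).
Qed.

Lemma fdeg_one (h : cube n -> bool) i0 :
  dep h i0 -> (forall l, dep h l -> l = i0) -> fdeg (fun x => sgnb (h x)) = 1%N.
Proof.
move=> Hi0 Hu; apply/eqP; rewrite eqn_leq; apply/andP; split.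
  apply/fdeg_leP => A HA.
  have : A \subset [set i0].
    apply/subsetP => l lA; rewrite inE; apply/eqP.
    case: (boolP (dep h l)) => [/Hu -> //| nd].
    move: HA; rewrite (fourier_indep (l := l)) ?eqxx //.
    move=> x; congr sgnb; move/existsPn: nd => /(_ x); rewrite negbK => /eqP ->.
    by [].
  by move/subset_leq_card; rewrite cards1.
rewrite lt0n; apply/negP => /eqP E0.
move/existsP: Hi0 => [x Hx].
have := fdeg0_const x E0; rewrite -(fdeg0_const (flip x i0) E0) => /sgnb_inj Exy.
by rewrite Exy eqxx in Hx.
Qed.
End Cube.

Lemma surj_inj n (p : 'I_n -> 'I_n) : (forall i, exists j, p j = i) -> injective p.
Proof.
move=> H.
have H' : forall i, exists j, p j == i by move=> i; have [j /eqP] := H i; exists j.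
pose q i := xchoose (H' i).
have Hq : cancel q p by move=> i; apply/eqP; exact: (xchooseP (H' i)).
have [q' Hq1 Hq2] := injF_bij (can_inj Hq).
have E : forall j, p j = q' j by move=> j; rewrite -{1}(Hq2 j) Hq.
by move=> a b; rewrite !E; apply: (can_inj Hq2).
Qed.

Section Main.
Variables (n : nat) (f : cube n -> cube n).
Hypothesis fbij : bijective f.
Definition dp j i := dep (coordb f j) i.
Definition NN (S : {set 'I_n}) := [set j | [exists i in S, dp j i]].

Lemma F1 i : exists j, dp j i.
Proof.
pose x0 : cube n := [ffun _ => false].
have : f x0 != f (flip x0 i).
  apply: contra (flip_neq x0 i) => /eqP E; apply/eqP; symmetry; exact: (bij_inj fbij).
case: (boolP [exists j, f x0 j != f (flip x0 i) j]) => [/existsP[j Hj] _|/existsPn H].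
  by exists j; apply/existsP; exists x0.
case/negP; apply/eqP/ffunP => j; apply/eqP; move: (H j); by rewrite negbK.
Qed.

Lemma F2 j : exists i, dp j i.
Proof.
case: (boolP [exists i, dp j i]) => [/existsP//|/existsPn H].
have C : forall z, f z j = f [ffun _ => false] j.
  move=> z; apply: (connect_cube (P := fun z => f z j = f [ffun _ => false] j) _ z erefl).
  move=> w l <-; move: (H l) => /existsPn /(_ w); rewrite negbK /coordb => /eqP <-.
  by [].
case: fbij => g _ gK.
pose y := flip (f [ffun _ => false]) j.
have := C (g y); rewrite gK /y flipE eqxx.
by case: (f _ j).
Qed.
End Main.

Lemma pick_out n (A : {set 'I_n}) : (#|A| < n)%N -> exists t, t \notin A.
Proof.
move=> H; have : (0 < #|~: A|)%N.
  by move: (cardsC A); rewrite card_ord => E; rewrite -(ltn_add2l #|A|) addn0 E.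
by case/card_gt0P => t; rewrite inE => ?; exists t.
Qed.

Unset Implicit Arguments.
Theorem mainTheorem9 (n : nat) (f : cube n -> cube n) (k : nat) :
  (2 <= n)%N -> bijective f -> (1 <= k)%N -> (k <= n - 1)%N ->
  ((forall j : 'I_n, fdeg (coordr f j) = 1%N) <->
   (forall S : {set 'I_n}, #|S| = k ->
      exists T : {set 'I_n}, #|T| = k /\
        (forall j, j \in T -> exists i, i \in S /\ 0 < Inf (coordb f j) i) /\
        (forall j, j \notin T -> forall i, i \in S -> Inf (coordb f j) i = 0))).
Proof.
move=> n2 fbij k1 kn; split.
  move=> Hdeg.
  have uniq : forall j i l, dp f j i -> dp f j l -> i = l.
    move=> j; apply: dep_uniq => A HA.
    by rewrite -(Hdeg j); apply: fdeg_ge.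
  have F2' : forall j, exists i, dp f j i by move=> j; apply: F2.
  pose p j := xchoose (F2' j).
  have pP : forall j, dp f j (p j) by move=> j; exact: xchooseP.
  have pinj : injective p.
    apply: surj_inj => i; have [j Hj] := F1 fbij i.
    by exists j; apply: uniq (pP j) Hj.
  move=> S HS; exists (p @^-1: S); split; first by rewrite card_preimset.
  split.
    move=> j; rewrite inE => Hj; exists (p j); split => //.
    by rewrite Inf_gt0; apply: pP.
  move=> j; rewrite inE => Hj i iS; apply/Inf_eq0; apply/negP => D.
  by rewrite (uniq _ _ _ (pP j) D) iS in Hj.
move=> H.
have Hc : forall S : {set 'I_n}, #|S| = k -> #|NN f S| = k.
  move=> S /H [T [HT [Ha Hb]]]; rewrite -HT; suff -> : NN f S = T by [].
  apply/setP => j; rewrite inE; apply/existsP/idP.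
    case=> i /andP[iS D]; apply: contraT => jT.
    by move: (Hb j jT i iS) => /Inf_eq0; rewrite /dp in D; rewrite D.
  move=> /Ha [i [iS Hi]]; exists i; rewrite iS; by rewrite Inf_gt0 in Hi.
have NNsub : forall S1 S2 : {set 'I_n}, S1 \subset S2 -> NN f S1 \subset NN f S2.
  move=> S1 S2 /subsetP sub; apply/subsetP => j; rewrite !inE => /existsP[i /andP[iS D]].
  by apply/existsP; exists i; rewrite sub.
have Pm : forall d, (d < k)%N -> forall S : {set 'I_n}, #|S| = (k - d)%N -> (#|NN f S| <= k - d)%N.
  elim => [|d IH] dk S HS; first by rewrite subn0 in HS *; rewrite Hc.
  have Sn : (#|S| < n)%N by rewrite HS; lia.
  have [t tS] := pick_out Sn.
  have HS1 : #|t |: S| = (k - d)%N by rewrite cardsU1 tS HS; lia.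
  have N1 := IH (ltnW dk) _ HS1.
  have kdn : (k - d < n)%N by lia.
  have [j jN] := pick_out (leq_ltn_trans N1 kdn).
  have [i Di] := F2 fbij j.
  have iS1 : i \notin t |: S.
    apply: contra jN => iS; rewrite inE; apply/existsP; exists i; by rewrite iS.
  have HS2 : #|i |: S| = (k - d)%N.
    by rewrite cardsU1 HS; move: iS1; rewrite in_setU1 negb_or => /andP[_ ->]; lia.
  have N2 := IH (ltnW dk) _ HS2.
  have jNS : j \notin NN f S by apply: contra jN; apply/subsetP/NNsub; apply: subsetUr.
  have : j |: NN f S \subset NN f (i |: S).
    rewrite subUset NNsub ?subsetUr // andbT sub1set inE; apply/existsP; exists i.
    by rewrite setU11.
  move/subset_leq_card; rewrite cardsU1 jNS add1n => Hle.
  have Hlt := leq_trans Hle N2; rewrite subnS -ltnS (ltn_predK Hlt); exact: Hlt.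
have col1 : forall i, (#|NN f [set i]| <= 1)%N.
  move=> i; have kk : (k.-1 < k)%N by lia.
  have E : (k - k.-1)%N = 1%N by lia.
  by have := Pm _ kk [set i]; rewrite E cards1; apply.
have F1' : forall i, exists j, dp f j i by move=> i; apply: F1.
pose c i := xchoose (F1' i).
have cP : forall i, dp f (c i) i by move=> i; exact: (xchooseP (F1' i)).
have cU : forall i j, dp f j i -> j = c i.
  move=> i j D; case: (eqVneq j (c i)) => // jc; exfalso.
  have : [set j; c i] \subset NN f [set i].
    rewrite subUset !sub1set !inE; apply/andP; split; apply/existsP; exists i;
      by rewrite set11 ?D ?cP.
  move/subset_leq_card; rewrite cards2 jc => H2.
  by have := leq_trans H2 (col1 i).
have cinj : injective c.
  apply: surj_inj => j; have [i Di] := F2 fbij j; exists i; exact/esym/cU.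
move=> j; have [i0 D0] := F2 fbij j.
apply: (fdeg_one (h := coordb f j) D0) => l Dl.
by apply: cinj; rewrite -(cU _ _ Dl) -(cU _ _ D0).
Qed.
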